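(* Let $\lambda_1,\lambda_2\in\mathbb{N}$. For all $(k,l,m)$ with $0\le m\le\lambda_1$, $0\le l\le\lambda_2$, $0\le k\le\lambda_2+m-l$, writing $v_{k,l,m}=F_2^k\hat F_3^lF_1^mv_\lambda\in V_\lambda$ (this notation is used for all $k,l,m\in\mathbb{N}$; such vectors may be zero), we have: (i) $K_1v_{k,l,m}=q^{\lambda_1+k-l-2m}v_{k,l,m}$; (ii) $K_2v_{k,l,m}=q^{\lambda_2-2k-l+m}v_{k,l,m}$; (iii) $F_1v_{k,l,m}=a_k(l,m)v_{k,l,m+1}+b_k(l,m)v_{k-1,l+1,m}$; (iv) $E_1v_{k,l,m}=\alpha_k(l,m)v_{k,l,m-1}+\beta_k(l,m)v_{k+1,l-1,m}$; (v) $F_2v_{k,l,m}=v_{k+1,l,m}$; (vi) $E_2v_{k,l,m}=\eta_k(l,m)v_{k-1,l,m}$; where (terms with a zero coefficient are omitted, so negative indices never matter) $a_k(l,m)=\frac{q^{\lambda_2+m+1-k-l}-q^{-\lambda_2-m-1+k+l}}{q^{\lambda_2+m+1-l}-q^{-\lambda_2-m-1+l}}$, $b_k(l,m)=\frac{q^k-q^{-k}}{q^{\lambda_2+m+1-l}-q^{-\lambda_2-m-1+l}}$, $\eta_k(l,m)=\frac{q^k-q^{-k}}{q-q^{-1}}\cdot\frac{q^{1-k+\lambda_2-l+m}-q^{k-1-\lambda_2+l-m}}{q-q^{-1}}$, $\alpha_k(l,m)=\frac{(q^m-q^{-m})(q^{\lambda_1-m+1}-q^{-\lambda_1+m-1})(q^{\lambda_2+m+1}-q^{-\lambda_2-m-1})}{(q-q^{-1})^2(q^{\lambda_2+m-l+1}-q^{-\lambda_2-m+l-1})}$,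 $\beta_k(l,m)=\frac{(q^l-q^{-l})(q^{\lambda_2-l+1}-q^{-\lambda_2+l-1})(q^{\lambda_1+\lambda_2-l+2}-q^{-\lambda_1-\lambda_2+l-2})}{(q-q^{-1})^2(q^{\lambda_2+m-l+1}-q^{-\lambda_2-m+l-1})}$.
   Context: Fix $0<q<1$. $\mathcal{U}_q(\mathfrak{su}(3))$ denotes the unital associative $\mathbb{C}$-algebra generated by $E_i,F_i,K_i^{\pm1}$ ($i=1,2$) subject to: the $K_i^{\pm1}$ pairwise commute, $K_iK_i^{-1}=K_i^{-1}K_i=1$, $K_iE_j=q^{a_{ij}}E_jK_i$, $K_iF_j=q^{-a_{ij}}F_jK_i$, $E_iF_j-F_jE_i=\delta_{ij}\frac{K_i-K_i^{-1}}{q-q^{-1}}$, where $a_{11}=a_{22}=2$, $a_{12}=a_{21}=-1$, and for $i\neq j$ the quantum Serre relations $E_i^2E_j-(q+q^{-1})E_iE_jE_i+E_jE_i^2=0=F_i^2F_j-(q+q^{-1})F_iF_jF_i+F_jF_i^2$. Define $\hat F_3=F_1F_2\frac{qK_2-q^{-1}K_2^{-1}}{q-q^{-1}}-F_2F_1\frac{K_2-K_2^{-1}}{q-q^{-1}}$. For $\lambda_1,\lambda_2\in\mathbb{N}=\{0,1,2,\dots\}$, $V_\lambda$ denotes the finite-dimensional irreducible representation of $\mathcal{U}_q(\mathfrak{su}(3))$ generated by a highest weight vector $v_\lambda$ with $E_iv_\lambda=0$, $K_iv_\lambda=q^{\lambda_i}v_\lambda$ ($i=1,2$). The vectors $F_2^k\hat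 F_3^lF_1^mv_\lambda$ with $0\le m\le\lambda_1$, $0\le l\le\lambda_2$, $0\le k\le\lambda_2+m-l$ form a basis of $V_\lambda$. *)

(* Defs.v *)
From HB Require Import structures.
From mathcomp Require Import all_boot all_order all_algebra.
Set Implicit Arguments. Unset Strict Implicit. Unset Printing Implicit Defensive.
Import Order.TTheory GRing.Theory Num.Theory.
Local Open Scope ring_scope.

Definition i1 : 'I_2 := ord0.
Definition i2 : 'I_2 := ord_max.

Definition cartan (i j : 'I_2) : int := if i == j then 2%Z else (-1)%Z.

Definition qb (C : numClosedFieldType) (q : C) (z : int) : C := q ^ z - q ^ (- z).

Definition is_linear_map (C : numClosedFieldType) (V : vectType C) (f : V -> V) : Prop :=
  forall (a : C) (x y : V), f (a *: x + y) = a *: f x + f y.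

Definition is_Uq_su3_rep (C : numClosedFieldType) (q : C) (V : vectType C)
    (E F K Ki : 'I_2 -> V -> V) : Prop :=
  (forall i, [/\ is_linear_map (E i), is_linear_map (F i),
                     is_linear_map (K i) & is_linear_map (Ki i)]) /\
  [/\ (forall i j x, [/\ K i (K j x) = K j (K i x), K i (Ki j x) = Ki j (K i x)
                       & Ki i (Ki j x) = Ki j (Ki i x)]),
      (forall i x, K i (Ki i x) = x /\ Ki i (K i x) = x),
      (forall i j x, K i (E j x) = q ^ cartan i j *: E j (K i x)
                   /\ K i (F j x) = q ^ (- cartan i j) *: F j (K i x)),
      (forall i j x, E i (F j x) - F j (E i x)
                     = if i == j then (q - q^-1)^-1 *: (K i x - Ki i x) else 0)
    & (forall i j x, i != j ->
         E i (E i (E j x)) - (q + q^-1) *: E i (E j (E i x)) + E j (E i (E i x)) = 0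
      /\ F i (F i (F j x)) - (q + q^-1) *: F i (F j (F i x)) + F j (F i (F i x)) = 0)].

Definition rep_irreducible (C : numClosedFieldType) (V : vectType C)
    (E F K Ki : 'I_2 -> V -> V) : Prop :=
  forall U : {vspace V},
    (forall i x, x \in U -> [/\ E i x \in U, F i x \in U, K i x \in U & Ki i x \in U]) ->
    U = 0%VS \/ U = fullv.

Definition F3hat (C : numClosedFieldType) (q : C) (V : vectType C)
    (F K Ki : 'I_2 -> V -> V) (x : V) : V :=
  F i1 (F i2 ((q - q^-1)^-1 *: (q *: K i2 x - q^-1 *: Ki i2 x)))
  - F i2 (F i1 ((q - q^-1)^-1 *: (K i2 x - Ki i2 x))).

Definition vklm (C : numClosedFieldType) (q : C) (V : vectType C)
    (F K Ki : 'I_2 -> V -> V) (v : V) (k l m : nat) : V :=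
  iter k (F i2) (iter l (F3hat q F K Ki) (iter m (F i1) v)).

Section Coeffs.
Variables (C : numClosedFieldType) (q : C) (l1 l2 k l m : nat).
Local Notation Z n := (n%:Z).

Definition coef_a : C :=
  qb q (Z l2 + Z m + 1 - Z k - Z l) / qb q (Z l2 + Z m + 1 - Z l).
Definition coef_b : C :=
  qb q (Z k) / qb q (Z l2 + Z m + 1 - Z l).
Definition coef_eta : C :=
  (qb q (Z k) / (q - q^-1)) * (qb q (1 - Z k + Z l2 - Z l + Z m) / (q - q^-1)).
Definition coef_alpha : C :=
  qb q (Z m) * qb q (Z l1 - Z m + 1) * qb q (Z l2 + Z m + 1)
  / ((q - q^-1) ^+ 2 * qb q (Z l2 + Z m - Z l + 1)).
Definition coef_beta : C :=
  qb q (Z l) * qb q (Z l2 - Z l + 1) * qb q (Z l1 + Z l2 - Z l + 2)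
  / ((q - q^-1) ^+ 2 * qb q (Z l2 + Z m - Z l + 1)).
End Coeffs.

(* Main.v *)
Require Import Defs.
From HB Require Import structures.
From mathcomp Require Import all_boot all_order all_algebra.
From mathcomp Require Import ring zify.
Import Order.TTheory GRing.Theory Num.Theory.
Set Implicit Arguments. Unset Strict Implicit. Unset Printing Implicit Defensive.
Local Open Scope ring_scope.

Section Lin.
Variables (C : numClosedFieldType) (V : vectType C).
Implicit Types (f : V -> V) (x y : V) (a : C).

Lemma linD f : is_linear_map f -> forall x y, f (x + y) = f x + f y.
Proof. by move=> hf x y; have := hf 1 x y; rewrite !scale1r. Qed.

Lemma lin0 f : is_linear_map f -> f 0 = 0.
Proof.
move=> hf; have := hf (-1) 0 0.
by rewrite scaler0 addr0 scaleN1r => h; rewrite {1}h addNr.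
Qed.

Lemma linZ f : is_linear_map f -> forall a x, f (a *: x) = a *: f x.
Proof. by move=> hf a x; rewrite -[a *: x]addr0 hf (lin0 hf) addr0. Qed.

Lemma linN f : is_linear_map f -> forall x, f (- x) = - f x.
Proof. by move=> hf x; rewrite -scaleN1r (linZ hf) scaleN1r. Qed.

Lemma linB f : is_linear_map f -> forall x y, f (x - y) = f x - f y.
Proof. by move=> hf x y; rewrite (linD hf) (linN hf). Qed.

Lemma linit f n : is_linear_map f -> is_linear_map (iter n f).
Proof.
move=> hf; elim: n => [|n IH] a x y //=.
by rewrite IH hf.
Qed.

Lemma lin_comp f g : is_linear_map f -> is_linear_map g -> is_linear_map (fun x => f (g x)).
Proof. by move=> hf hg a x y; rewrite hg hf. Qed.
Lemma lin_sub f g : is_linear_map f -> is_linear_map g -> is_linear_map (fun x => f x - g x).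
Proof.
move=> hf hg a x y; rewrite hf hg scalerBr opprD !addrA; congr (_ + _).
by rewrite addrAC.
Qed.
Lemma lin_scale f c : is_linear_map f -> is_linear_map (fun x => c *: f x).
Proof. by move=> hf a x y; rewrite hf scalerDr !scalerA mulrC. Qed.

Definition L4 (A B D G : V) (a b d g : C) := a *: A + b *: B + d *: D + g *: G.

Lemma L4D A B D G a b d g a' b' d' g' :
  L4 A B D G a b d g + L4 A B D G a' b' d' g' =
  L4 A B D G (a + a') (b + b') (d + d') (g + g').
Proof. by rewrite /L4 !scalerDl addrACA [X in X + _]addrACA [X in X + _ + _]addrACA. Qed.

Lemma L4Z A B D G a b d g s :
  s *: L4 A B D G a b d g = L4 A B D G (s * a) (s * b) (s * d) (s * g).
Proof. by rewrite /L4 !scalerDr !scalerA. Qed.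

Lemma L4N A B D G a b d g : - L4 A B D G a b d g = L4 A B D G (- a) (- b) (- d) (- g).
Proof. by rewrite -scaleN1r L4Z !mulN1r. Qed.

Lemma L40 A B D G : 0 = L4 A B D G 0 0 0 0.
Proof. by rewrite /L4 !scale0r !addr0. Qed.

Lemma L4_eq A B D G a b d g a' b' d' g' : a = a' -> b = b' -> d = d' -> g = g' ->
  L4 A B D G a b d g = L4 A B D G a' b' d' g'.
Proof. by move=> -> -> -> ->. Qed.

Lemma norm4 (P : V -> V -> V -> V -> Prop) A B D G :
  P (L4 A B D G 1 0 0 0) (L4 A B D G 0 1 0 0) (L4 A B D G 0 0 1 0) (L4 A B D G 0 0 0 1) ->
  P A B D G.
Proof. by rewrite /L4 !scale1r !scale0r !addr0 !add0r. Qed.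

Lemma norm3 (P : V -> V -> V -> Prop) A B D :
  (forall G, P (L4 A B D G 1 0 0 0) (L4 A B D G 0 1 0 0) (L4 A B D G 0 0 1 0)) ->
  P A B D.
Proof. by move=> /(_ 0); rewrite /L4 !scale1r !scale0r !addr0 !add0r. Qed.

Lemma norm2 (P : V -> V -> Prop) A B :
  (forall D G, P (L4 A B D G 1 0 0 0) (L4 A B D G 0 1 0 0)) -> P A B.
Proof. by move=> /(_ 0 0); rewrite /L4 !scale1r !scale0r !addr0 !add0r. Qed.

Lemma norm1 (P : V -> Prop) A :
  (forall B D G, P (L4 A B D G 1 0 0 0)) -> P A.
Proof. by move=> /(_ 0 0 0); rewrite /L4 !scale1r !scale0r !addr0. Qed.

End Lin.

Ltac lzero a b d g := rewrite ?(L40 a b d g).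

Ltac lnorm4 A B D G :=
  rewrite ?scale0r ?scaler0;
  generalize A; let a := fresh "A" in intro a;
  generalize B; let b := fresh "B" in intro b;
  generalize D; let d := fresh "D" in intro d;
  generalize G; let g := fresh "G" in intro g;
  pattern a, b, d, g; apply norm4; cbv beta; lzero a b d g;
  repeat rewrite ?L4N ?L4Z ?L4D; apply L4_eq.

Ltac lnorm3 A B D :=
  rewrite ?scale0r ?scaler0;
  generalize A; let a := fresh "A" in intro a;
  generalize B; let b := fresh "B" in intro b;
  generalize D; let d := fresh "D" in intro d;
  pattern a, b, d; apply norm3; let g := fresh "G" in intro g; cbv beta; lzero a b d g;
  repeat rewrite ?L4N ?L4Z ?L4D; apply L4_eq.

Ltac lnorm2 A B :=
  rewrite ?scale0r ?scaler0;
  generalize A; let a := fresh "A" in intro a;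
  generalize B; let b := fresh "B" in intro b;
  pattern a, b; apply norm2; let d := fresh "D" in let g := fresh "G" in intros d g; cbv beta;
  lzero a b d g;
  repeat rewrite ?L4N ?L4Z ?L4D; apply L4_eq.

Ltac lnorm1 A :=
  rewrite ?scale0r ?scaler0;
  generalize A; let a := fresh "A" in intro a;
  pattern a; apply norm1; let b := fresh "B" in let d := fresh "D" in let g := fresh "G" in
  intros b d g; cbv beta;
  lzero a b d g;
  repeat rewrite ?L4N ?L4Z ?L4D; apply L4_eq.

Section Main.
Variables (C : numClosedFieldType) (q : C) (V : vectType C) (E F K Ki : 'I_2 -> V -> V).
Hypothesis hq0 : 0 < q.
Hypothesis hq1 : q < 1.
Hypothesis hrep : is_Uq_su3_rep q E F K Ki.

Lemma qn0 : q != 0. Proof. by rewrite gt_eqF. Qed.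
Lemma qqn0 : q - q^-1 != 0.
Proof.
rewrite subr_eq0; apply/eqP => h.
have : q ^+ 2 = 1 by rewrite expr2 {2}h mulfV ?qn0.
move/eqP; rewrite sqrf_eq1 => /orP[]/eqP h1.
  by move: hq1; rewrite h1 ltxx.
by move: hq0; rewrite h1 oppr_gt0 ltr10.
Qed.

Lemma qq1 : q * q - 1 != 0.
Proof.
apply: contra qqn0 => /eqP h; apply/eqP.
have : q * q = 1 by apply/eqP; rewrite -subr_eq0 h.
by move=> h'; rewrite -[q^-1]mul1r -h' mulfK ?qn0 // subrr.
Qed.

Lemma linE i : is_linear_map (E i). Proof. by case: hrep => /(_ i) []. Qed.
Lemma linF i : is_linear_map (F i). Proof. by case: hrep => /(_ i) []. Qed.
Lemma linK i : is_linear_map (K i). Proof. by case: hrep => /(_ i) []. Qed.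
Lemma linKi i : is_linear_map (Ki i). Proof. by case: hrep => /(_ i) []. Qed.

Lemma KKi i x : K i (Ki i x) = x. Proof. by case: hrep => _ [_ h _ _ _]; case: (h i x). Qed.
Lemma KiK i x : Ki i (K i x) = x. Proof. by case: hrep => _ [_ h _ _ _]; case: (h i x). Qed.
Lemma KE i j x : K i (E j x) = q ^ cartan i j *: E j (K i x).
Proof. by case: hrep => _ [_ _ h _ _]; case: (h i j x). Qed.
Lemma KF i j x : K i (F j x) = q ^ (- cartan i j) *: F j (K i x).
Proof. by case: hrep => _ [_ _ h _ _]; case: (h i j x). Qed.
Lemma EF i j x : E i (F j x) - F j (E i x)
                     = if i == j then (q - q^-1)^-1 *: (K i x - Ki i x) else 0.
Proof. by case: hrep => _ [_ _ _ h _]. Qed.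
Lemma serreF i j x : i != j ->
  F i (F i (F j x)) - (q + q^-1) *: F i (F j (F i x)) + F j (F i (F i x)) = 0.
Proof. by case: hrep => _ [_ _ _ _ h] /(h i j x) []. Qed.

Local Notation F1 := (F i1).
Local Notation F2 := (F i2).
Local Notation E1 := (E i1).
Local Notation E2 := (E i2).
Local Notation K1 := (K i1).
Local Notation K2 := (K i2).
Local Notation F3 := (F3hat q F K Ki).

Lemma E1F2 x : E1 (F2 x) = F2 (E1 x).
Proof. by apply/eqP; rewrite -subr_eq0 EF. Qed.
Lemma E2F1 x : E2 (F1 x) = F1 (E2 x).
Proof. by apply/eqP; rewrite -subr_eq0 EF. Qed.

Definition wt x (a b : int) := K1 x = q ^ a *: x /\ K2 x = q ^ b *: x.

Lemma wtKi i x (a : int) : K i x = q ^ a *: x -> Ki i x = q ^ (- a) *: x.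
Proof.
move=> h; have := KiK i x; rewrite h (linZ (linKi i)) => e.
by rewrite -{2}e scalerA -invr_expz mulVf ?scale1r // expfz_neq0 // qn0.
Qed.


Ltac qexp := rewrite /qb ?opprD ?opprK ?(expfzDr _ _ qn0) -?invr_expz ?expr1z ?oppr0 ?addr0 ?expr0z.

Definition qn (z : int) := qb q z / (q - q^-1).

Lemma KFw i j x c : K i x = q ^ c *: x -> K i (F j x) = q ^ (c - cartan i j) *: F j x.
Proof. by move=> h; rewrite KF h (linZ (linF j)) scalerA -expfzDr ?qn0 // addrC. Qed.
Lemma KEw i j x c : K i x = q ^ c *: x -> K i (E j x) = q ^ (c + cartan i j) *: E j x.
Proof. by move=> h; rewrite KE h (linZ (linE j)) scalerA -expfzDr ?qn0 // addrC. Qed.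

Lemma c11 : cartan i1 i1 = 2. Proof. by rewrite /cartan eqxx. Qed.
Lemma c22 : cartan i2 i2 = 2. Proof. by rewrite /cartan eqxx. Qed.
Lemma c12 : cartan i1 i2 = -1. Proof. by []. Qed.
Lemma c21 : cartan i2 i1 = -1. Proof. by []. Qed.

Lemma wtF1 x a b : wt x a b -> wt (F1 x) (a - 2) (b + 1).
Proof. by case=> h1 h2; split; rewrite ?(KFw _ h1) ?(KFw _ h2) ?c11 ?c21 ?opprK. Qed.
Lemma wtF2 x a b : wt x a b -> wt (F2 x) (a + 1) (b - 2).
Proof. by case=> h1 h2; split; rewrite ?(KFw _ h1) ?(KFw _ h2) ?c12 ?c22 ?opprK. Qed.
Lemma wtE1 x a b : wt x a b -> wt (E1 x) (a + 2) (b - 1).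
Proof. by case=> h1 h2; split; rewrite ?(KEw _ h1) ?(KEw _ h2) ?c11 ?c21. Qed.
Lemma wtE2 x a b : wt x a b -> wt (E2 x) (a - 1) (b + 2).
Proof. by case=> h1 h2; split; rewrite ?(KEw _ h1) ?(KEw _ h2) ?c12 ?c22. Qed.

Lemma wtD x y a b : wt x a b -> wt y a b -> wt (x + y) a b.
Proof.
by case=> h1 h2 [h3 h4]; split; rewrite (linD (linK _)) ?h1 ?h2 ?h3 ?h4 scalerDr.
Qed.
Lemma wtZ x a b c : wt x a b -> wt (c *: x) a b.
Proof. by case=> h1 h2; split; rewrite (linZ (linK _)) ?h1 ?h2 !scalerA mulrC. Qed.
Lemma wtN x a b : wt x a b -> wt (- x) a b.
Proof. by move=> h; rewrite -scaleN1r; apply: wtZ. Qed.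
Lemma wtB x y a b : wt x a b -> wt y a b -> wt (x - y) a b.
Proof. by move=> h1 h2; apply: wtD => //; apply: wtN. Qed.

Lemma F3E x a b : wt x a b -> F3 x = qn (b + 1) *: F1 (F2 x) - qn b *: F2 (F1 x).
Proof.
case=> h1 h2; rewrite /F3hat h2 (wtKi h2) !scalerA -!scalerBl.
rewrite !(linZ (linF _)) !scalerA; congr (_ *: _ - _ *: _); rewrite /qn; qexp;
  by field; rewrite qn0 qq1 expfz_neq0 ?qn0.
Qed.

Lemma wtF3 x a b : wt x a b -> wt (F3 x) (a - 1) (b - 1).
Proof.
move=> h; rewrite (F3E h); apply: wtB; apply: wtZ.
  have -> : a - 1 = a + 1 - 2 by ring.
  have -> : b - 1 = b - 2 + 1 by ring.
  by apply/wtF1/wtF2.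
have -> : a - 1 = a - 2 + 1 by ring.
have -> : b - 1 = b + 1 - 2 by ring.
by apply/wtF2/wtF1.
Qed.


Lemma natzS (n : nat) : (n.+1)%:Z = n%:Z + 1. Proof. by rewrite -addn1 PoszD. Qed.
Lemma two_mul (z : int) : 2 * z = z + z. Proof. by ring. Qed.
Ltac qexp2 := rewrite /qn /qb ?exprS ?exprnP ?natzS ?(@mulrDr int) ?(@mulr1 int) ?two_mul ?opprD ?opprK ?(expfzDr _ _ qn0) -?invr_expz ?expr1z ?expr0z.
Ltac nzt := rewrite ?qn0 ?qq1 ?(expfz_neq0 _ qn0).
Lemma eqCC (a b : C) : a = b -> a = b. Proof. by []. Qed.
Ltac fld := try apply: eqCC; rewrite ?(mul1r, mulr1, addr0, add0r, oppr0, subr0, mulr0, mul0r); first [done | field; nzt; done | match goal with |- ?g => idtac "FAIL" g end; fail].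
Ltac qfield := try apply: eqCC; qexp2; rewrite ?(mul1r, mulr1, addr0, add0r, oppr0, subr0, mulr0, mul0r); first [done | field; nzt; done | match goal with |- ?g => idtac "FAIL" g end; fail].

Lemma linF3 : is_linear_map F3.
Proof.
apply: lin_sub; apply: lin_comp (linF _) _; apply: lin_comp (linF _) _; apply: lin_scale.
  by apply: lin_sub; apply: lin_scale; [apply: linK | apply: linKi].
by apply: lin_sub; [apply: linK | apply: linKi].
Qed.

Lemma wt_eq x a b a' b' : a = a' -> b = b' -> wt x a b -> wt x a' b'.
Proof. by move=> -> ->. Qed.

Lemma wt_iterF1 x a b m : wt x a b -> wt (iter m F1 x) (a - 2 * m%:Z) (b + m%:Z).
Proof.
move=> h; elim: m => [|m IH] /=; first by apply: wt_eq h; ring.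
by apply: wt_eq (wtF1 IH); rewrite natzS; ring.
Qed.
Lemma wt_iterF2 x a b k : wt x a b -> wt (iter k F2 x) (a + k%:Z) (b - 2 * k%:Z).
Proof.
move=> h; elim: k => [|k IH] /=; first by apply: wt_eq h; ring.
by apply: wt_eq (wtF2 IH); rewrite natzS; ring.
Qed.
Lemma wt_iterF3 x a b l : wt x a b -> wt (iter l F3 x) (a - l%:Z) (b - l%:Z).
Proof.
move=> h; elim: l => [|l IH] /=; first by apply: wt_eq h; ring.
by apply: wt_eq (wtF3 IH); rewrite natzS; ring.
Qed.

Lemma serreF' i j x : i != j ->
  F i (F i (F j x)) = (q + q^-1) *: F i (F j (F i x)) - F j (F i (F i x)).
Proof.
move=> /(serreF x) h; apply/eqP; rewrite -subr_eq0 -h opprB addrA addrAC.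
by [].
Qed.

Lemma F1F3 x a b : wt x a b -> F1 (F3 x) = F3 (F1 x).
Proof.
move=> h; rewrite (F3E (wtF1 h)) (F3E h).
rewrite (linB (linF _)) !(linZ (linF _)) serreF' //.
lnorm2 (F1 (F2 (F1 x))) (F2 (F1 (F1 x))). all: qfield.
Qed.


Lemma Eiw i y c : K i y = q ^ c *: y -> E i (F i y) = F i (E i y) + qn c *: y.
Proof.
move=> h; have := EF i i y; rewrite eqxx h (wtKi h) => e.
rewrite -[E i (F i y)](subrK (F i (E i y))) e addrC; congr (_ + _).
by rewrite -scalerBl scalerA /qn /qb mulrC.
Qed.

Lemma Esl2 i y a : E i y = 0 -> K i y = q ^ a *: y -> forall k,
  E i (iter k.+1 (F i) y) = (qn (k%:Z + 1) * qn (a - k%:Z)) *: iter k (F i) y.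
Proof.
move=> h0 h k.
have hK : forall n, K i (iter n (F i) y) = q ^ (a - 2 * n%:Z) *: iter n (F i) y.
  elim=> [|n IH] /=; first by rewrite h mulr0 subr0.
  by rewrite (KFw _ IH) /cartan eqxx natzS; congr (q ^ _ *: _); ring.
elim: k => [|k IH].
  rewrite /= (Eiw h) h0 (lin0 (linF _)) add0r; congr (_ *: _); qfield.
rewrite iterS (Eiw (hK _)) IH (linZ (linF _)) -iterS.
lnorm1 (iter k.+1 (F i) y); qfield.
Qed.

Lemma E2F3 x a b : wt x a b -> E2 x = 0 -> E2 (F3 x) = 0.
Proof.
move=> h h0; rewrite (F3E h) (linB (linE _)) !(linZ (linE _)).
rewrite E2F1 (Eiw h.2) (Eiw (wtF1 h).2) E2F1 h0 !(lin0 (linF _)) !add0r.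
rewrite (linZ (linF _)); lnorm1 (F1 x); qfield.
Qed.

Lemma E1F3 x a b : wt x a b ->
  qn b *: E1 (F3 x) = qn (b + 1) *: F3 (E1 x) - F2 (F1 (E1 x)) + (qn b * qn (a + b + 1)) *: F2 x.
Proof.
move=> h; rewrite (F3E h) (F3E (wtE1 h)) (linB (linE _)) !(linZ (linE _)).
rewrite (Eiw (wtF2 h).1) E1F2 E1F2 (Eiw h.1).
rewrite !(linD (linF _)) !(linZ (linF _)).
lnorm3 (F1 (F2 (E1 x))) (F2 (F1 (E1 x))) (F2 x); qfield.
Qed.

Lemma KEY u a b : wt u a b ->
  qn b *: F3 (F2 u) - F2 (F1 (F2 u)) = qn (b - 1) *: F2 (F3 u).
Proof.
move=> h; rewrite (F3E h) (F3E (wtF2 h)) (linB (linF _)) !(linZ (linF _)).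
rewrite serreF' //.
lnorm2 (F1 (F2 (F2 u))) (F2 (F1 (F2 u))); qfield.
Qed.

Definition Xop y := F1 (F2 y) - q *: F2 (F1 y).

Lemma XF2 y : Xop (F2 y) = q^-1 *: F2 (Xop y).
Proof.
rewrite /Xop (linB (linF _)) !(linZ (linF _)) serreF' //.
lnorm2 (F2 (F1 (F2 y))) (F1 (F2 (F2 y))); qfield.
Qed.

Lemma F1F2k k y : F1 (iter k.+1 F2 y) =
  q ^+ k.+1 *: iter k.+1 F2 (F1 y) + qn (k%:Z + 1) *: iter k F2 (Xop y).
Proof.
elim: k y => [|k IH] y.
  rewrite /= /Xop; lnorm2 (F1 (F2 y)) (F2 (F1 y)); qfield.
rewrite iterSr IH (_ : F1 (F2 y) = Xop y + q *: F2 (F1 y)); last by rewrite /Xop subrK.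
rewrite XF2 (linD (linit _ (linF _))) !(linZ (linit _ (linF _))) -!iterSr.
lnorm2 (iter k.+1 F2 (Xop y)) (iter k.+2 F2 (F1 y)); qfield.
Qed.


Lemma XF3 y a b : wt y a b -> qn (b + 1) *: Xop y = F3 y - q ^ (b + 1) *: F2 (F1 y).
Proof.
move=> h; rewrite (F3E h) /Xop.
lnorm2 (F1 (F2 y)) (F2 (F1 y)); qfield.
Qed.

Lemma F1F2kM y a b : wt y a b -> forall k,
  qn (b + 1) *: F1 (iter k F2 y) =
  qn (b + 1 - k%:Z) *: iter k F2 (F1 y) + qn k%:Z *: iter k.-1 F2 (F3 y).
Proof.
move=> h [|k].
  rewrite /=; lnorm2 (F1 y) (F3 y); qfield.
rewrite -[k.+1.-1]/k F1F2k scalerDr !scalerA [qn (b + 1) * qn _]mulrC -[(qn (k + 1) * _) *: _]scalerA.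
rewrite -[qn (b + 1) *: iter k F2 _](linZ (linit _ (linF _))) (XF3 h) (linB (linit _ (linF _))).
rewrite (linZ (linit _ (linF _))) -iterSr.
lnorm2 (iter k.+1 F2 (F1 y)) (iter k F2 (F3 y)); qfield.
Qed.


Lemma qb0 : qb q 0 = 0. Proof. by rewrite /qb oppr0 subrr. Qed.

Lemma qb_neq0 z : 0 < z -> qb q z != 0.
Proof.
case: z => // n; rewrite ltz_nat => hn.
rewrite /qb -invr_expz subr_eq0; apply/eqP => h.
have h1 : q ^+ n < 1 by rewrite exprn_ilt1 ?ltW // -lt0n.
have h2 : 1 < (q ^+ n)^-1 by rewrite invf_gt1 // exprn_gt0.
by move: h2; rewrite -[X in _ < X]h => h3; have := lt_trans h3 h1; rewrite ltxx.
Qed.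

Lemma qn_neq0 z : 0 < z -> qn z != 0.
Proof. by move=> h; rewrite /qn mulf_neq0 ?invr_eq0 ?qqn0 ?qb_neq0. Qed.

Lemma pushD d c0 a z s w :
  d *: (c0 *: (a *: F3 z - F2 (F1 z) + s *: w)) =
  c0 *: (a *: F3 (d *: z) - F2 (F1 (d *: z)) + (d * s) *: w).
Proof.
rewrite (linZ linF3) !(linZ (linF _)).
lnorm3 (F3 z) (F2 (F1 z)) w; ring.
Qed.

Variables (v : V) (l1 l2 : nat).
Hypothesis hE : forall i, E i v = 0.
Hypothesis hK1 : K1 v = q ^+ l1 *: v.
Hypothesis hK2 : K2 v = q ^+ l2 *: v.

Definition u l m := iter l F3 (iter m F1 v).
Local Notation w := (vklm q F K Ki v).

Lemma wv : wt v l1%:Z l2%:Z. Proof. by split. Qed.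
Lemma wt_u l m : wt (u l m) (l1%:Z - 2 * m%:Z - l%:Z) (l2%:Z + m%:Z - l%:Z).
Proof. exact: wt_iterF3 (wt_iterF1 _ wv). Qed.
Lemma wt_w k l m :
  wt (w k l m) (l1%:Z - 2 * m%:Z - l%:Z + k%:Z) (l2%:Z + m%:Z - l%:Z - 2 * k%:Z).
Proof. exact: wt_iterF2 (wt_u l m). Qed.

Lemma F1u l m : F1 (u l m) = u l m.+1.
Proof.
rewrite /u iterS; elim: l => [|l IH] //=.
by rewrite (F1F3 (wt_iterF3 l (wt_iterF1 m wv))) IH.
Qed.

Lemma E2u l m : E2 (u l m) = 0.
Proof.
elim: l => [|l IH].
  rewrite /u /=; elim: m => [|m IH] /=; first exact: hE.
  by rewrite E2F1 IH (lin0 (linF _)).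
by rewrite /u iterS (E2F3 (wt_u l m)).
Qed.

Lemma E1w k l m : E1 (w k l m) = iter k F2 (E1 (u l m)).
Proof. by elim: k => [|k IH] //=; rewrite E1F2 IH. Qed.

Definition Dl m l := qb q (l2%:Z + m%:Z - l%:Z + 1).
Definition alt m := qb q m%:Z * qb q (l1%:Z - m%:Z + 1) * qb q (l2%:Z + m%:Z + 1) / (q - q^-1) ^+ 2.
Definition blt l := qb q l%:Z * qb q (l2%:Z - l%:Z + 1) * qb q (l1%:Z + l2%:Z - l%:Z + 2) / (q - q^-1) ^+ 2.

Lemma alt0 : alt 0 = 0. Proof. by rewrite /alt qb0 !mul0r. Qed.
Lemma blt0 : blt 0 = 0. Proof. by rewrite /blt qb0 !mul0r. Qed.

Lemma inv0 m : Dl m 0 *: E1 (u 0 m) = alt m *: u 0 m.-1 + blt 0 *: F2 (u 0 m).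
Proof.
rewrite blt0 scale0r addr0 /u /=; case: m => [|m].
  by rewrite /= (hE i1) alt0 !scaler0 scale0r.
rewrite (Esl2 (a := l1%:Z) (hE i1) hK1) scalerA /=; congr (_ *: _).
rewrite /Dl /alt; qfield.
Qed.


Lemma hyalt m l : m = 0%N \/ F1 (u l m.-1) = u l m.
Proof. by case: m => [|m]; [left | right; exact: F1u]. Qed.

Lemma DlS m l : Dl m l.+1 = (q - q^-1) * qn (l2%:Z + m%:Z - l%:Z).
Proof.
rewrite /Dl /qn natzS (_ : l2%:Z + m%:Z - (l%:Z + 1) + 1 = l2%:Z + m%:Z - l%:Z); last by ring.
by field; rewrite ?qn0 ?qq1.
Qed.

Lemma eu l m : u l.+1 m = F3 (u l m). Proof. by []. Qed.

Lemma KEY' x a b : wt x a b -> F2 (F1 (F2 x)) = qn b *: F3 (F2 x) - qn (b - 1) *: F2 (F3 x).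
Proof. by move=> h; rewrite -(KEY h) opprB addrC subrK. Qed.

Lemma inv_step m l : (l < l2)%N ->
  Dl m l *: E1 (u l m) = alt m *: u l m.-1 + blt l *: F2 (u l.-1 m) ->
  Dl m l.+1 *: E1 (u l.+1 m) = alt m *: u l.+1 m.-1 + blt l.+1 *: F2 (u l m).
Proof.
move=> hl IH.
have hD : Dl m l != 0 by apply: qb_neq0; lia.
apply: (scalerI hD).
rewrite (eu l m) (eu l m.-1) DlS -[((q - q^-1) * _) *: _]scalerA (E1F3 (wt_u l m)) pushD IH.
rewrite !(linD linF3, linZ linF3, linD (linF _), linZ (linF _)).
case: (hyalt m l) => [hm | ->].
{ case: l hl IH hD => [|l] hl IH hD.
  { change (0.-1)%N with 0%N; rewrite blt0.
    lnorm3 (F3 (u 0 m.-1)) (F2 (F1 (u 0 m.-1))) (F2 (u 0 m)).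
    all: rewrite /Dl /blt /alt; qexp2; rewrite hm ?expr0z ?invr1; time fld. }
  change (l.+1.-1)%N with l; rewrite (KEY' (wt_u l m)) -(eu l m).
  lnorm4 (F3 (F2 (u l m))) (F3 (u l.+1 m.-1)) (F2 (F1 (u l.+1 m.-1))) (F2 (u l.+1 m)).
  all: rewrite /Dl /blt /alt; qexp2; rewrite hm ?expr0z ?invr1; time fld. }
case: l hl IH hD => [|l] hl IH hD.
{ change (0.-1)%N with 0%N; rewrite blt0.
  lnorm3 (F3 (u 0 m.-1)) (F2 (F1 (u 0 m.-1))) (F2 (u 0 m)).
  all: rewrite /Dl /blt /alt; time qfield. }
change (l.+1.-1)%N with l; rewrite (KEY' (wt_u l m)) -(eu l m).
lnorm4 (F3 (F2 (u l m))) (F3 (u l.+1 m.-1)) (F2 (F1 (u l.+1 m.-1))) (F2 (u l.+1 m)).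
all: rewrite /Dl /blt /alt; time qfield.
Qed.

Lemma invE m l : (l <= l2)%N ->
  Dl m l *: E1 (u l m) = alt m *: u l m.-1 + blt l *: F2 (u l.-1 m).
Proof.
elim: l => [_|l IH hl]; first exact: inv0.
by apply: inv_step => //; apply: IH; apply: ltnW.
Qed.

Lemma main_all k l m : (l <= l2)%N ->
  [/\ K1 (w k l m) = q ^ (l1%:Z + k%:Z - l%:Z - 2 * m%:Z) *: w k l m
    & K2 (w k l m) = q ^ (l2%:Z - 2 * k%:Z - l%:Z + m%:Z) *: w k l m] /\
  [/\       F1 (w k l m) = coef_a q l2 k l m *: w k l m.+1
                       + coef_b q l2 k l m *: w k.-1 l.+1 m,
      E1 (w k l m) = coef_alpha q l1 l2 l m *: w k l m.-1
                       + coef_beta q l1 l2 l m *: w k.+1 l.-1 m,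
      F2 (w k l m) = w k.+1 l m
    & E2 (w k l m) = coef_eta q l2 k l m *: w k.-1 l m].
Proof.
move=> hl; have [hw1 hw2] := wt_w k l m.
split; first split.
- by rewrite hw1; congr (q ^ _ *: _); ring.
- by rewrite hw2; congr (q ^ _ *: _); ring.
split.
- have hb : qn (l2%:Z + m%:Z - l%:Z + 1) != 0 by apply: qn_neq0; lia.
  apply: (scalerI hb).
  rewrite /vklm -/(u l m) (F1F2kM (wt_u l m)) F1u -eu scalerDr !scalerA.
  have hD : qb q (l2%:Z + m%:Z + 1 - l%:Z) != 0 by apply: qb_neq0; lia.
  congr (_ *: _ + _ *: _).
    rewrite (_ : l2%:Z + m%:Z - l%:Z + 1 - k%:Z = l2%:Z + m%:Z + 1 - k%:Z - l%:Z); last by ring.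
    rewrite (_ : l2%:Z + m%:Z - l%:Z + 1 = l2%:Z + m%:Z + 1 - l%:Z); last by ring.
    by apply: eqCC; rewrite /coef_a /qn; field; rewrite hD ?qn0 ?qq1.
  rewrite (_ : l2%:Z + m%:Z - l%:Z + 1 = l2%:Z + m%:Z + 1 - l%:Z); last by ring.
  by apply: eqCC; rewrite /coef_b /qn; field; rewrite hD ?qn0 ?qq1.
- have hD : Dl m l != 0 by apply: qb_neq0; lia.
  rewrite E1w (_ : E1 (u l m) = (Dl m l)^-1 *: (alt m *: u l m.-1 + blt l *: F2 (u l.-1 m))); last first.
    by rewrite -(invE m hl) scalerA mulVf ?scale1r.
  rewrite (linZ (linit _ (linF _))) (linD (linit _ (linF _))) !(linZ (linit _ (linF _))) -iterSr.
  rewrite scalerDr !scalerA; congr (_ *: _ + _ *: _).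
    by apply: eqCC; rewrite /coef_alpha /alt /Dl; field; rewrite hD ?qn0 ?qq1.
  by apply: eqCC; rewrite /coef_beta /blt /Dl; field; rewrite hD ?qn0 ?qq1.
- by [].
clear hw1 hw2; case: k => [|k].
  by rewrite /vklm /= -/(u l m) E2u /coef_eta qb0 !mul0r scale0r.
rewrite /vklm -/(u l m) (Esl2 (E2u l m) (wt_u l m).2 k) -[k.+1.-1]/k.
congr (_ *: _); rewrite /coef_eta; qfield.
Qed.

End Main.

Unset Implicit Arguments.

Theorem proposition2p4 (C : numClosedFieldType) (q : C) (hq0 : 0 < q) (hq1 : q < 1)
    (V : vectType C) (E F K Ki : 'I_2 -> V -> V) (l1 l2 : nat) (v : V)
    (hrep : is_Uq_su3_rep q E F K Ki)
    (hirr : rep_irreducible E F K Ki)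
    (hv0 : v != 0)
    (hE : forall i, E i v = 0)
    (hK1 : K i1 v = q ^+ l1 *: v) (hK2 : K i2 v = q ^+ l2 *: v)
    (k l m : nat) (hm : (m <= l1)%N) (hl : (l <= l2)%N) (hk : (k <= l2 + m - l)%N) :
  let w := vklm q F K Ki v in
  [/\ K i1 (w k l m) = q ^ (l1%:Z + k%:Z - l%:Z - 2 * m%:Z) *: w k l m
    & K i2 (w k l m) = q ^ (l2%:Z - 2 * k%:Z - l%:Z + m%:Z) *: w k l m] /\
  [/\       F i1 (w k l m) = coef_a q l2 k l m *: w k l m.+1
                       + coef_b q l2 k l m *: w k.-1 l.+1 m,
      E i1 (w k l m) = coef_alpha q l1 l2 l m *: w k l m.-1
                       + coef_beta q l1 l2 l m *: w k.+1 l.-1 m,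
      F i2 (w k l m) = w k.+1 l m
    & E i2 (w k l m) = coef_eta q l2 k l m *: w k.-1 l m].
Proof.
move=> w; by apply: main_all.
Qed.
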